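(* Consider the problem $$\text{(P)}\qquad \max_{\beta\in X}\ R(\beta)=\frac1n\sum_{i=1}^n r(w^i\cdot\beta;\,b_i^{(1)},b_i^{(2)})$$ and the problem $$\text{(G)}\qquad \max_{\beta,v,y}\ \frac1n\sum_{i=1}^n y_i\quad\text{s.t. } v_i=w^i\cdot\beta\ (i=1,\dots,n),\ \ (v_i,y_i)\in\operatorname{cl}\big(\mathrm{gr}(r(\cdot;b_i^{(1)},b_i^{(2)});[l_i,u_i])\big)\ (i=1,\dots,n),\ \ \beta\in X.$$ If $(\beta,v,y)$ is an optimal solution of (G), then $\beta$ is an optimal solution of (P). Conversely, if $\beta$ is an optimal solution of (P), then there exist $v\in\mathbb{R}^n$, $y\in\mathbb{R}^n$ such that $(\beta,v,y)$ is an optimal solution of (G).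
   Context: For bids $b^{(1)}\ge b^{(2)}\ge 0$ the reward function is $r(v;b^{(1)},b^{(2)})=b^{(2)}$ if $v\le b^{(2)}$, $=v$ if $b^{(2)}<v\le b^{(1)}$, and $=0$ if $v>b^{(1)}$. Data: $w^i\in\mathbb{R}^d$ and $b_i^{(1)}\ge b_i^{(2)}\ge0$ for $i=1,\dots,n$, and $X=[L,U]^d$. For a set $D\subseteq\mathbb{R}$, $\mathrm{gr}(r(\cdot;b^{(1)},b^{(2)});D)=\{(v,y): v\in D,\ y=r(v;b^{(1)},b^{(2)})\}$, and $\operatorname{cl}$ denotes topological closure in $\mathbb{R}^2$. The bounds are $l_i=\min_{\beta\in X}w^i\cdot\beta$ and $u_i=\max_{\beta\in X}w^i\cdot\beta$. *)

(* Defs.v *)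
From Stdlib Require Import Reals Lra Lia.
Open Scope R_scope.

Fixpoint rsum (n : nat) (f : nat -> R) : R :=
  match n with O => 0 | S k => rsum k f + f k end.

(* vectors in R^d are represented by nat -> R, only indices < d matter *)
Definition dot (d : nat) (a b : nat -> R) : R := rsum d (fun j => a j * b j).

Definition reward (v b1 b2 : R) : R :=
  if Rle_dec v b2 then b2 else if Rle_dec v b1 then v else 0.

Definition inX (d : nat) (L U : R) (beta : nat -> R) : Prop :=
  forall j, (j < d)%nat -> L <= beta j <= U.

Definition graph (f : R -> R) (D : R -> Prop) : R * R -> Prop :=
  fun p => D (fst p) /\ snd p = f (fst p).

(* topological closure in R^2 (product topology, generated by open boxes) *)
Definition closure2 (S : R * R -> Prop) (p : R * R) : Prop :=
  forall eps, 0 < eps -> exists q, S q /\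
    Rabs (fst q - fst p) < eps /\ Rabs (snd q - snd p) < eps.

Definition Pobj (n d : nat) (w : nat -> nat -> R) (b1 b2 : nat -> R)
  (beta : nat -> R) : R :=
  / INR n * rsum n (fun i => reward (dot d (w i) beta) (b1 i) (b2 i)).

Definition optP (n d : nat) (w : nat -> nat -> R) (b1 b2 : nat -> R) (L U : R)
  (beta : nat -> R) : Prop :=
  inX d L U beta /\
  forall beta', inX d L U beta' -> Pobj n d w b1 b2 beta' <= Pobj n d w b1 b2 beta.

Definition feasG (n d : nat) (w : nat -> nat -> R) (b1 b2 : nat -> R) (L U : R)
  (l u : nat -> R) (beta v y : nat -> R) : Prop :=
  inX d L U beta /\
  forall i, (i < n)%nat ->
    v i = dot d (w i) beta /\
    closure2 (graph (fun t => reward t (b1 i) (b2 i)) (fun t => l i <= t <= u i))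
             (v i, y i).

Definition Gobj (n : nat) (y : nat -> R) : R := / INR n * rsum n y.

Definition optG (n d : nat) (w : nat -> nat -> R) (b1 b2 : nat -> R) (L U : R)
  (l u : nat -> R) (beta v y : nat -> R) : Prop :=
  feasG n d w b1 b2 L U l u beta v y /\
  forall beta' v' y', feasG n d w b1 b2 L U l u beta' v' y' -> Gobj n y' <= Gobj n y.

(* Main.v *)
Require Import Defs.
From Stdlib Require Import Reals Lra Lia.
Open Scope R_scope.

Lemma rsum_le (n : nat) (f g : nat -> R) :
  (forall k, (k < n)%nat -> f k <= g k) -> rsum n f <= rsum n g.
Proof.
  induction n as [|n IH]; intros H; simpl; [lra|].
  assert (rsum n f <= rsum n g) by (apply IH; intros; apply H; lia).
  assert (f n <= g n) by (apply H; lia). lra.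
Qed.

Lemma scale_le (n : nat) (f g : nat -> R) :
  (forall k, (k < n)%nat -> f k <= g k) -> / INR n * rsum n f <= / INR n * rsum n g.
Proof.
  intros H. destruct n as [|m].
  - simpl. lra.
  - apply Rmult_le_compat_l.
    + apply Rlt_le, Rinv_0_lt_compat, lt_0_INR; lia.
    + apply rsum_le; exact H.
Qed.

Lemma usc (b1 b2 l u v y : R) : b1 >= b2 -> b2 >= 0 ->
  closure2 (graph (fun t => reward t b1 b2) (fun t => l <= t <= u)) (v, y) ->
  y <= reward v b1 b2.
Proof.
  intros h1 h2 Hc. destruct (Rle_dec y (reward v b1 b2)) as [Hy|Hy]; [exact Hy|].
  exfalso. apply Rnot_le_lt in Hy.
  set (e := y - reward v b1 b2).
  destruct (Rle_dec v b1) as [Hv|Hv].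
  - destruct (Hc (e/2)) as [[t z] [[_ Hz] [Ht Hz2]]]; [unfold e; lra|].
    simpl in *. apply Rabs_def2 in Ht. apply Rabs_def2 in Hz2.
    subst z. unfold e in *. unfold reward in *.
    destruct (Rle_dec v b2); destruct (Rle_dec t b2); try destruct (Rle_dec t b1); try destruct (Rle_dec v b1); lra.
  - destruct (Hc (Rmin (e/2) (v - b1))) as [[t z] [[_ Hz] [Ht Hz2]]].
    { apply Rmin_glb_lt; unfold e; lra. }
    simpl in *. apply Rabs_def2 in Ht. apply Rabs_def2 in Hz2.
    pose proof (Rmin_l (e/2) (v-b1)). pose proof (Rmin_r (e/2) (v-b1)).
    subst z. unfold e in *. unfold reward in *.
    destruct (Rle_dec v b2); destruct (Rle_dec t b2); try destruct (Rle_dec t b1);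
      try destruct (Rle_dec v b1); lra.
Qed.

Lemma graph_in (b1 b2 l u v : R) : l <= v <= u ->
  closure2 (graph (fun t => reward t b1 b2) (fun t => l <= t <= u)) (v, reward v b1 b2).
Proof.
  intros H eps He. exists (v, reward v b1 b2). simpl.
  split; [split; [exact H|reflexivity]|].
  rewrite !Rminus_diag, Rabs_R0. lra.
Qed.

Theorem proposition1 (n d : nat) (w : nat -> nat -> R) (b1 b2 : nat -> R)
  (L U : R) (l u : nat -> R)
  (hb : forall i, (i < n)%nat -> b1 i >= b2 i /\ b2 i >= 0)
  (hl : forall i, (i < n)%nat ->
          (exists beta, inX d L U beta /\ dot d (w i) beta = l i) /\
          (forall beta, inX d L U beta -> l i <= dot d (w i) beta))
  (hu : forall i, (i < n)%nat ->
          (exists beta, inX d L U beta /\ dot d (w i) beta = u i) /\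
          (forall beta, inX d L U beta -> dot d (w i) beta <= u i)) :
  (forall beta v y, optG n d w b1 b2 L U l u beta v y -> optP n d w b1 b2 L U beta) /\
  (forall beta, optP n d w b1 b2 L U beta ->
     exists v y, optG n d w b1 b2 L U l u beta v y).
Proof.
  assert (Hfeas : forall beta, inX d L U beta ->
    feasG n d w b1 b2 L U l u beta (fun i => dot d (w i) beta)
      (fun i => reward (dot d (w i) beta) (b1 i) (b2 i))).
  { intros beta Hb. split; [exact Hb|]. intros i Hi. split; [reflexivity|].
    apply graph_in. split; [apply (proj2 (hl i Hi)) | apply (proj2 (hu i Hi))]; exact Hb. }
  assert (Hle : forall beta v y, feasG n d w b1 b2 L U l u beta v y ->
    Gobj n y <= Pobj n d w b1 b2 beta).
  { intros beta v y [Hb Hf]. unfold Gobj, Pobj. apply scale_le. intros k Hk.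
    destruct (Hf k Hk) as [Hv Hc]. destruct (hb k Hk) as [h1 h2].
    rewrite <- Hv. exact (usc _ _ _ _ _ _ h1 h2 Hc). }
  split.
  - intros beta v y [Hf Hopt]. split; [exact (proj1 Hf)|].
    intros beta' Hb'. specialize (Hopt _ _ _ (Hfeas beta' Hb')).
    unfold Gobj in Hopt. fold (Pobj n d w b1 b2 beta') in Hopt.
    pose proof (Hle _ _ _ Hf). unfold Gobj in *. lra.
  - intros beta [Hb Hopt].
    exists (fun i => dot d (w i) beta), (fun i => reward (dot d (w i) beta) (b1 i) (b2 i)).
    split; [exact (Hfeas beta Hb)|].
    intros beta' v' y' Hf'. pose proof (Hle _ _ _ Hf').
    pose proof (Hopt beta' (proj1 Hf')). unfold Gobj, Pobj in *. lra.
Qed.
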